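(* Let $k\ge 2$ and $m\ge 5$ be integers and let $G$ be the complete $k$-partite graph $K(m,2,\ldots,2)$ (one part of size $m$ and $k-1$ parts of size $2$). Then $h(G)=ch(G)\ge k+1$.
   Context: All graphs are finite and simple. A list assignment $L$ to a graph $G$ assigns a finite set $L(v)$ to each vertex $v$; a proper $L$-coloring is a map $\psi$ with $\psi(v)\in L(v)$ for all $v$ and $\psi(u)\ne\psi(v)$ for every edge $uv$. The choice number $ch(G)$ is the least $k$ such that $G$ is properly $L$-colorable whenever $|L(v)|\ge k$ for all $v$. For a subgraph $H$ of $G$ and a color $\sigma$, let $H_\sigma$ denote the subgraph of $H$ induced by $\{v\in V(H):\sigma\in L(v)\}$, and let $\alpha$ denote the independence number (with $\alpha$ of the null graph equal to $0$). $G$ and $L$ satisfy Hall's condition if $\sum_{\sigma}\alpha(H_\sigma)\ge |V(H)|$ for every subgraph $H$ of $G$, the sum being over all colors. The Hall number $h(G)$ is the smallest positive integer $k$ such that $G$ has a proper $L$-coloring whenever $G$ and $L$ satisfy Hall's condition and $|L(v)|\ge k$ for every $v\in V(G)$. *)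

(* Defs.v *)
From mathcomp Require Import all_boot.
Set Implicit Arguments. Unset Strict Implicit. Unset Printing Implicit Defensive.

(* Colors are natural numbers; a list assignment L assigns a finite list of
   colors to each vertex; L(v) is read as the set of its elements, so
   |L(v)| = size (undup (L v)). *)

Definition simple_graph (V : finType) (e : rel V) : Prop :=
  symmetric e /\ irreflexive e.

Definition list_assignment (V : finType) := V -> seq nat.

Definition list_size (V : finType) (L : list_assignment V) (v : V) : nat :=
  size (undup (L v)).

Definition L_colorable (V : finType) (e : rel V) (L : list_assignment V) : Prop :=
  exists psi : V -> nat,
    (forall v, psi v \in L v) /\ (forall x y, e x y -> psi x != psi y).

Definition choosable (V : finType) (e : rel V) (k : nat) : Prop :=
  forall L : list_assignment V, (forall v, k <= list_size L v) -> L_colorable e L.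

Definition is_choice_number (V : finType) (e : rel V) (c : nat) : Prop :=
  choosable e c /\ forall k, choosable e k -> c <= k.

Definition is_subgraph (V : finType) (e : rel V) (S : {set V}) (eH : rel V) : Prop :=
  forall x y, eH x y -> [&& e x y, x \in S & y \in S].

Definition independent (V : finType) (r : rel V) (I : {set V}) : bool :=
  [forall x in I, forall y in I, ~~ r x y].

Definition alpha (V : finType) (r : rel V) (A : {set V}) : nat :=
  \max_(I : {set V} | (I \subset A) && independent r I) #|I|.

(* all colors occurring in L (colors outside contribute alpha(null graph) = 0) *)
Definition colors (V : finType) (L : list_assignment V) : seq nat :=
  undup (flatten [seq L v | v <- enum V]).

Definition Hsigma (V : finType) (L : list_assignment V) (S : {set V}) (sigma : nat)
  : {set V} := [set v in S | sigma \in L v].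

Definition hall_condition (V : finType) (e : rel V) (L : list_assignment V) : Prop :=
  forall (S : {set V}) (eH : rel V), is_subgraph e S eH ->
    \sum_(sigma <- colors L) alpha eH (Hsigma L S sigma) >= #|S|.

Definition hall_good (V : finType) (e : rel V) (k : nat) : Prop :=
  forall L : list_assignment V, hall_condition e L ->
    (forall v, k <= list_size L v) -> L_colorable e L.

Definition is_hall_number (V : finType) (e : rel V) (h : nat) : Prop :=
  0 < h /\ hall_good e h /\ forall k, 0 < k -> hall_good e k -> h <= k.

Definition Kpart_vertex (m k : nat) : finType := ('I_m + ('I_k.-1 * 'I_2))%type.

Definition Kpart_part (m k : nat) (x : Kpart_vertex m k) : nat :=
  match x with inl _ => 0 | inr p => (nat_of_ord p.1).+1 end.

Definition Kpart_edge (m k : nat) : rel (Kpart_vertex m k) :=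
  fun x y => Kpart_part x != Kpart_part y.

(* Main.v *)
Require Import Defs.
From mathcomp Require Import all_boot zify.
From Stdlib Require Import Classical.
Set Implicit Arguments. Unset Strict Implicit. Unset Printing Implicit Defensive.

Lemma ex_min (P : nat -> Prop) n : P n -> exists c, P c /\ forall j, P j -> c <= j.
Proof.
elim: n {-2}n (leqnn n) => [|N IH] n Hn Pn;
  case: (classic (exists j, j < n /\ P j)) => [[j [jn Pj]]|H].
- lia.
- exists n; split => // j Pj; rewrite leqNgt; apply/negP => jn; apply: H; by exists j.
- apply: (IH j) => //; lia.
- exists n; split => // j Pj; rewrite leqNgt; apply/negP => jn; apply: H; by exists j.
Qed.

Lemma greedy (V : finType) (L : V -> seq nat) (s : seq V) : uniq s ->
  (forall v, v \in s -> size s <= size (undup (L v))) ->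
  exists psi : V -> nat, (forall v, v \in s -> psi v \in L v) /\ {in s &, injective psi}.
Proof.
elim: s => [|x s IH] /=.
  by move=> _ _; exists (fun _ => 0); split.
move=> /andP[xs us] Hs.
have [psi [Hm Hi]] : exists psi : V -> nat, (forall v, v \in s -> psi v \in L v) /\ {in s &, injective psi}.
  apply: IH => // v vs; apply: leq_trans (Hs v _); first by [].
  by rewrite inE vs orbT.
have : ~~ all (fun c => c \in map psi s) (undup (L x)).
  apply/negP => /allP H.
  have := uniq_leq_size (undup_uniq _) H.
  rewrite size_map; have := Hs x; rewrite inE eqxx => /(_ isT) /=; lia.
case/allPn => c cL cn.
exists (fun v => if v == x then c else psi v); split.
  move=> v; rewrite inE; case: eqP => [-> _|_ /= vs]; first by rewrite -mem_undup.
  exact: Hm.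
move=> u v; rewrite !inE.
case: (eqVneq u x) => [->|ux]; case: (eqVneq v x) => [->|vx] //= uS vS.
- move=> E; move: cn; by rewrite E map_f.
- move=> E; move: cn; by rewrite -E map_f.
- exact: Hi.
Qed.

Lemma choosable_card (V : finType) (e : rel V) : irreflexive e -> choosable e #|V|.
Proof.
move=> irr L HL.
have H1 : forall v, v \in enum V -> size (enum V) <= size (undup (L v)).
  by move=> v _; rewrite -cardE; exact: HL v.
have [psi [Hm Hi]] := @greedy V L (enum V) (enum_uniq _) H1.
exists psi; split => [v|x y exy]; first by apply: Hm; rewrite mem_enum.
apply/negP => /eqP E.
have xy := Hi x y (mem_enum _ x) (mem_enum _ y) E.
by move: exy; rewrite xy irr.
Qed.

Lemma miss (n K lo : nat) (f : 'I_n -> nat) : injective f -> K = n.+1 ->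
  (forall j, lo <= f j < lo + K) ->
  exists s, lo <= s < lo + K /\ forall c, lo <= c < lo + K -> c != s -> exists j, f j = c.
Proof.
move=> inj EK Hr.
set im := map f (enum 'I_n).
have uim : uniq im by rewrite map_inj_uniq ?enum_uniq.
have sim : size im = n by rewrite size_map size_enum_ord.
have subim : {subset im <= iota lo K}.
  move=> x /mapP [j _ ->]; by rewrite mem_iota.
have : ~~ all (fun c => c \in im) (iota lo K).
  apply/negP => /allP H.
  have := uniq_leq_size (iota_uniq _ _) H; rewrite size_iota sim; lia.
case/allPn => s sR sn; exists s; split; first by rewrite -mem_iota.
move=> c cR cs.
case: (boolP (c \in im)) => [/mapP [j _ ->]|cn]; first by exists j.
have U : uniq [:: s, c & im] by rewrite /= inE negb_or eq_sym cs sn cn uim.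
have Hsub : {subset [:: s, c & im] <= iota lo K}.
  move=> x; rewrite !inE => /or3P [/eqP->|/eqP->|/subim //] //; by rewrite mem_iota.
have := uniq_leq_size U Hsub.
rewrite size_iota /= sim; lia.
Qed.
Lemma card_setP (V : finType) (S : {set V}) (P : pred V) :
  #|[set x in S | P x]| = \sum_(x in S) P x.
Proof.
rewrite -sum1_card (eq_bigl (fun x => (x \in S) && P x)) => [|x]; last by rewrite inE.
rewrite big_mkcondr /=; apply: eq_bigr => x _; by case: (P x).
Qed.

Lemma hall_multi (V : finType) (e : rel V) (k : nat) (part : V -> nat)
  (L : list_assignment V) : 0 < k -> (forall v, part v < k) ->
  (forall x y, e x y -> part x != part y) -> (forall v, k <= list_size L v) ->
  hall_condition e L.
Proof.
move=> k0 Hb He HL S eH Hsub.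
pose I sg (r : 'I_k) := [set v in S | (sg \in L v) && (part v == r)].
have A1 : forall sg, \sum_(r < k) #|I sg r| <= k * alpha eH (Hsigma L S sg).
  move=> sg; rewrite -[k in k * _]card_ord -sum_nat_const.
  apply: leq_sum => r _; apply: leq_bigmax_cond; apply/andP; split.
    apply/subsetP => v; rewrite !inE => /andP[-> /andP[-> _]] //.
  apply/forallP => x; apply/implyP => xI; apply/forallP => y; apply/implyP => yI.
  apply/negP => exy; have /andP[e' _] := Hsub x y exy.
  have := He x y e'; move: xI yI; rewrite !inE => /and3P[_ _ /eqP->] /and3P[_ _ /eqP->].
  by rewrite eqxx.
have A2 : forall sg, #|Hsigma L S sg| = \sum_(r < k) #|I sg r|.
  move=> sg; rewrite /Hsigma (card_setP S (fun v => sg \in L v)).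
  have cI : forall r, #|I sg r| = \sum_(x in S) ((sg \in L x) && (part x == r)).
    by move=> r; exact: (card_setP S (fun v => (sg \in L v) && (part v == r))).
  rewrite (eq_bigr _ (fun r _ => cI r)).
  rewrite exchange_big /=; apply: eq_bigr => x _.
  case: (sg \in L x) => /=; last by rewrite big1.
  rewrite (bigD1 (Ordinal (Hb x))) //= eqxx big1 // => r /negP rn.
  case: eqP => // E; case: rn; apply/eqP/val_inj => /=; by rewrite E.
have A3 : k * #|S| <= \sum_(sg <- colors L) #|Hsigma L S sg|.
  under eq_bigr => sg _ do rewrite /Hsigma (card_setP S (fun v => sg \in L v)).
  rewrite exchange_big /= mulnC -sum_nat_const; apply: leq_sum => v _.
  apply: leq_trans (HL v) _.
  rewrite /list_size.
  have -> : \sum_(i <- colors L) (i \in L v) = count (mem (L v)) (colors L).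
    elim: (colors L) => [|a l IHl]; by rewrite ?big_nil ?big_cons //= IHl.
  rewrite -size_filter; apply: uniq_leq_size; first exact: undup_uniq.
  move=> x; rewrite mem_undup mem_filter => xL; rewrite /= xL /colors mem_undup.
  apply/flattenP; exists (L v) => //; apply/mapP; exists v => //; by rewrite mem_enum.
rewrite -(leq_pmul2l k0); apply: leq_trans A3 _.
rewrite big_distrr /=; apply: leq_sum => sg _; by rewrite A2.
Qed.
Definition pk (k : nat) := k./2.

Definition Blist (k i : nat) : seq nat :=
  match i with
  | 0 => iota (pk k) (k - pk k) ++ iota (k + (k - pk k)) (k - (k - pk k))
  | 1 => iota 0 (pk k) ++ iota k (k - pk k)
  | 2 => iota (pk k) (k - pk k) ++ iota k (k - pk k)
  | 3 => iota 0 (pk k) ++ iota (k + (k - pk k) - 1) (k - (k - pk k) + 1)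
  | _ => iota 0 (pk k) ++ (iota k (k - pk k - 1) ++ iota (k + (k - pk k)) (k - (k - pk k)))
  end.

Definition badL (m k : nat) : list_assignment (Kpart_vertex m k) :=
  fun v => match v with
           | inl i => Blist k i
           | inr pr => if val pr.2 == 0 then iota 0 k else iota k k
           end.

Arguments badL : clear implicits.

Lemma pk_bounds k : 2 <= k -> [/\ 1 <= pk k, pk k + pk k <= k & k <= pk k + pk k + 1].
Proof.
move=> hk; have := odd_double_half k; rewrite /pk -addnn.
case: (odd k) => /= E; split; lia.
Qed.

Lemma uniq2 a n b l : a + n <= b -> uniq (iota a n ++ iota b l).
Proof.
move=> H; rewrite cat_uniq !iota_uniq /= andbT; apply/hasPn => x.
rewrite !mem_iota => /andP[h1 h2]; apply/negP => /andP[h3 h4]; lia.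
Qed.

Lemma uniq3 a n b l c r : a + n <= b -> b + l <= c ->
  uniq (iota a n ++ (iota b l ++ iota c r)).
Proof.
move=> H1 H2; rewrite cat_uniq uniq2 ?iota_uniq ?andbT //; apply/hasPn => x.
rewrite mem_cat !mem_iota => /orP[] /andP[h1 h2]; apply/negP => /andP[h3 h4]; lia.
Qed.

Lemma badL_size m k : 2 <= k -> forall v, k <= list_size (badL m k) v.
Proof.
move=> hk; have [h1 h2 h3] := pk_bounds hk.
case=> [i|[j b]]; rewrite /list_size /=.
  case: i => i /= _.
  do 4 (case: i => [|i]; first by rewrite undup_id ?uniq2 ?size_cat ?size_iota; lia).
  by rewrite undup_id ?uniq3 ?size_cat ?size_iota; lia.
by case: ifP => _; rewrite undup_id ?iota_uniq // size_iota.
Qed.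

Lemma badL_not (m k : nat) : 2 <= k -> 5 <= m -> ~ L_colorable (@Kpart_edge m k) (badL m k).
Proof.
move=> hk hm [psi [Hm Hp]].
have [h1 h2 h3] := pk_bounds hk.
pose fa (j : 'I_k.-1) := psi (inr (j, ord0)).
pose fb (j : 'I_k.-1) := psi (inr (j, ord_max)).
have ia : injective fa.
  move=> j1 j2 E; apply/eqP; apply/negPn/negP => ne.
  have := Hp (inr (j1, ord0)) (inr (j2, ord0)).
  rewrite /Kpart_edge /= eqSS.
  have -> : (val j1 != val j2) by [].
  move: E; rewrite /fa => ->; by rewrite eqxx => /(_ isT).
have ib : injective fb.
  move=> j1 j2 E; apply/eqP; apply/negPn/negP => ne.
  have := Hp (inr (j1, ord_max)) (inr (j2, ord_max)).
  rewrite /Kpart_edge /= eqSS.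
  have -> : (val j1 != val j2) by [].
  move: E; rewrite /fb => ->; by rewrite eqxx => /(_ isT).
have Ek : k = k.-1.+1 by lia.
have Ra : forall j, 0 <= fa j < 0 + k.
  by move=> j; have := Hm (inr (j, ord0)); rewrite /= mem_iota.
have Rb : forall j, k <= fb j < k + k.
  by move=> j; have := Hm (inr (j, ord_max)); rewrite /= mem_iota.
have [s [sr Hs]] := miss ia Ek Ra.
have [t [tr Ht]] := miss ib Ek Rb.
have key : forall i : 'I_m, (forall c, c \in Blist k i -> [&& c < k + k, c != s & c != t]) -> False.
  move=> i Hi; have := Hi _ (Hm (inl i)) => /and3P [c2 cs ct].
  case: (ltnP (psi (inl i)) k) => ck.
    have [j Ej] := Hs (psi (inl i)) ltac:(lia) cs.
    have := Hp (inl i) (inr (j, ord0)); rewrite /Kpart_edge /= /fa in Ej *.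
    by rewrite Ej eqxx => /(_ isT).
  have [j Ej] := Ht (psi (inl i)) ltac:(lia) ct.
  have := Hp (inl i) (inr (j, ord_max)); rewrite /Kpart_edge /= /fb in Ej *.
  by rewrite Ej eqxx => /(_ isT).
case: (ltnP s (pk k)) => sp; case: (ltnP t (k + (k - pk k))) => tq.
- apply: (key (@Ordinal m 0 ltac:(lia))) => c.
  rewrite /Blist /= mem_cat !mem_iota => /orP[] /andP[a b]; apply/and3P; split; lia.
- apply: (key (@Ordinal m 2 ltac:(lia))) => c.
  rewrite /Blist /= mem_cat !mem_iota => /orP[] /andP[a b]; apply/and3P; split; lia.
- case: (ltnP t (k + (k - pk k) - 1)) => tq'.
  + apply: (key (@Ordinal m 3 ltac:(lia))) => c.
    rewrite /Blist /= mem_cat !mem_iota => /orP[] /andP[a b]; apply/and3P; split; lia.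
  + apply: (key (@Ordinal m 4 ltac:(lia))) => c.
    rewrite /Blist /= !mem_cat !mem_iota => /or3P[] /andP[a b]; apply/and3P; split; lia.
- apply: (key (@Ordinal m 1 ltac:(lia))) => c.
  rewrite /Blist /= mem_cat !mem_iota => /orP[] /andP[a b]; apply/and3P; split; lia.
Qed.

Theorem corollaryD (k m : nat) (hk : 2 <= k) (hm : 5 <= m) :
  exists c : nat,
    is_choice_number (@Kpart_edge m k) c /\
    is_hall_number (@Kpart_edge m k) c /\
    k.+1 <= c.
Proof.
have irr : irreflexive (@Kpart_edge m k) by move=> x; rewrite /Kpart_edge eqxx.
have hallK : forall j L, k <= j -> (forall v, j <= list_size L v) ->
    hall_condition (@Kpart_edge m k) L.
  move=> j L kj HL; apply: (@hall_multi _ _ k (@Kpart_part m k)) => //.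
  - lia.
  - case=> [i|[a b]] /=; first lia.
    have := ltn_ord a; lia.
  - move=> v; exact: leq_trans kj (HL v).
have notk : ~ choosable (@Kpart_edge m k) k.
  by move=> H; apply: (badL_not hk hm); apply: H; exact: badL_size.
have nothk : ~ hall_good (@Kpart_edge m k) k.
  move=> H; apply: (badL_not hk hm); apply: H; last exact: badL_size.
  apply: (hallK k) => //; exact: badL_size.
have [c [Cc Cmin]] := ex_min (choosable_card irr).
have mono : forall a b, a <= b -> choosable (@Kpart_edge m k) a -> choosable (@Kpart_edge m k) b.
  move=> a b ab H L HL; apply: H => v; exact: leq_trans ab (HL v).
have hmono : forall a b, a <= b -> hall_good (@Kpart_edge m k) a -> hall_good (@Kpart_edge m k) b.
  move=> a b ab H L HC HL; apply: H => // v; exact: leq_trans ab (HL v).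
have ck : k < c.
  rewrite ltnNge; apply/negP => ck; apply: notk; exact: mono _ _ ck Cc.
exists c; split; first by split.
split; last exact: ck.
split; first lia.
split; first by move=> L _ HL; exact: Cc L HL.
move=> j j0 Hj; case: (leqP k j) => kj.
  apply: Cmin => L HL; apply: Hj => //; exact: hallK kj HL.
exfalso; apply: nothk; exact: hmono _ _ (ltnW kj) Hj.
Qed.
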